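(* Let $\mathcal{M}$ be an $\mathcal{L}$-structure ($\mathcal{L}$ possibly many-sorted). Let $S$ and $\widetilde{S}$ be sorts and $f:\widetilde{S}\to S$ an $\mathcal{L}$-definable (without parameters) function with uniformly finite fibres: there is $N$ with $|f^{-1}(b)|\leq N$ for all $b\in S(\mathcal{M})$. Let $B\subseteq f(\widetilde{S}(\mathcal{M}))$ and $\widetilde{B} := f^{-1}(B)\subseteq\widetilde{S}(\mathcal{M})$. Let $A\subseteq\mathcal{M}^x$ and let $\phi(x,y)$ be an $\mathcal{L}$-formula with $y$ a variable of sort $S$, such that the formula $\phi(x;f(z))$ (with $z$ of sort $\widetilde{S}$) has a uniform strong honest definition on $A$ over $\widetilde{B}$. Then $\phi(x;y)$ has a uniform strong honest definition on $A$ over $B$.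
   Context: For a tuple of variables $x$ of sorts $S_1,\ldots,S_n$ and a set $C$ of elements of $\mathcal{M}$, $C^x := \prod_i(S_i(\mathcal{M})\cap C)$. For a formula $\phi(x;y)$, $b\in\mathcal{M}^x$ and a set $B_0$, $\operatorname{tp}_\phi(b/B_0)$ is the set of $\phi(x,c)$ for $c\in B_0^y$ with $\mathcal{M}\models\phi(b,c)$ and $\neg\phi(x,c)$ for $c\in B_0^y$ with $\mathcal{M}\models\neg\phi(b,c)$. For $\zeta(x;w)$ and $e$, ''$\zeta(x,e)\vdash\operatorname{tp}_\phi(b/B_0)$'' means every $b'\in\mathcal{M}^x$ with $\mathcal{M}\models\zeta(b',e)$ satisfies all formulas of $\operatorname{tp}_\phi(b/B_0)$. An $\mathcal{L}$-formula $\zeta(x;w)$ is a uniform strong honest definition for $\phi(x;y)$ on $A$ over $B$ if for every $a\in A$ and every finite $B_0\subseteq B$ with $|B_0|\geq 2$ there is $e\in B_0^w$ with $\mathcal{M}\models\zeta(a,e)$ and $\zeta(x,e)\vdash\operatorname{tp}_\phi(a/B_0)$. *)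

(* Defs.v *)
From Stdlib Require Import List.
Import ListNotations.
Set Implicit Arguments.

Record signature := Signature {
  sort : Type;
  fsym : Type;
  fargs : fsym -> list sort;
  fres : fsym -> sort;
  rsym : Type;
  rargs : rsym -> list sort }.

Fixpoint env {S : Type} (D : S -> Type) (l : list S) : Type :=
  match l with nil => unit | s :: l' => (D s * env D l')%type end.

Fixpoint happ {S : Type} (D : S -> Type) (l1 l2 : list S)
  : env D l1 -> env D l2 -> env D (l1 ++ l2) :=
  match l1 return env D l1 -> env D l2 -> env D (l1 ++ l2) with
  | nil => fun _ e2 => e2
  | s :: l => fun e1 e2 => (fst e1, happ D l l2 (snd e1) e2)
  end.

Fixpoint hall {S : Type} (D : S -> Type) (P : forall s, D s -> Prop) (l : list S)
  : env D l -> Prop :=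
  match l return env D l -> Prop with
  | nil => fun _ => True
  | s :: l' => fun e => P s (fst e) /\ hall D P l' (snd e)
  end.

Record structure (L : signature) := Structure {
  dom : sort L -> Type;
  finterp : forall f : fsym L, env dom (fargs L f) -> dom (fres L f);
  rinterp : forall r : rsym L, env dom (rargs L r) -> Prop }.

Section Syntax.
Variable L : signature.

Inductive var : list (sort L) -> sort L -> Type :=
| vz : forall G s, var (s :: G) s
| vs : forall G s t, var G s -> var (t :: G) s.

Inductive term (G : list (sort L)) : sort L -> Type :=
| tvar : forall s, var G s -> term G s
| tapp : forall f : fsym L, terms G (fargs L f) -> term G (fres L f)
with terms (G : list (sort L)) : list (sort L) -> Type :=
| tnil : terms G nil
| tcons : forall s l, term G s -> terms G l -> terms G (s :: l).

(** L-formulas with free variables in the context G (a tuple of sorted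
    variables); the other connectives/quantifiers are definable. *)
Inductive formula (G : list (sort L)) : Type :=
| fTrue : formula G
| feq : forall s, term G s -> term G s -> formula G
| frel : forall r : rsym L, terms G (rargs L r) -> formula G
| fneg : formula G -> formula G
| fand : formula G -> formula G -> formula G
| fex : forall s, formula (s :: G) -> formula G.

Variable M : structure L.

Fixpoint lookup G s (v : var G s) : env (dom M) G -> dom M s :=
  match v in var G s return env (dom M) G -> dom M s with
  | @vz _ _ => fun e => fst e
  | @vs _ _ _ v' => fun e => lookup v' (snd e)
  end.

Fixpoint teval G s (t : term G s) (e : env (dom M) G) : dom M s :=
  match t with
  | @tvar _ _ v => lookup v e
  | @tapp _ f ts => finterp M f (tseval ts e)
  end
with tseval G l (ts : terms G l) (e : env (dom M) G) : env (dom M) l :=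
  match ts in terms _ l return env (dom M) l with
  | @tnil _ => tt
  | @tcons _ _ _ t ts' => (teval t e, tseval ts' e)
  end.

Fixpoint sat G (phi : formula G) (e : env (dom M) G) : Prop :=
  match phi with
  | fTrue _ => True
  | feq t1 t2 => teval t1 e = teval t2 e
  | frel r ts => rinterp M r (tseval ts e)
  | fneg p => ~ sat p e
  | fand p q => sat p e /\ sat q e
  | @fex _ s p => exists d : dom M s, sat p (d, e)
  end.

Definition elt := {s : sort L & dom M s}.
Definition mset := elt -> Prop.

Definition sortset (s : sort L) (P : dom M s -> Prop) : mset :=
  fun p => exists a : dom M s, p = existT _ s a /\ P a.

(** Uniform strong honest definition, for phi(x;y) given by its
    interpretation [phi : M^x -> M^y -> Prop].  A finite subset B0 of B is
    given as a duplicate-free list of elements; |B0| = its length.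
    e in B0^w  <->  hall (fun s d => In (existT _ s d) B0) e.
    zeta(x,e) |- tp_phi(a/B0) is unfolded literally. *)
Definition ushd (x y : list (sort L)) (phi : env (dom M) x -> env (dom M) y -> Prop)
  (A : env (dom M) x -> Prop) (B : mset) : Prop :=
  exists (w : list (sort L)) (zeta : formula (x ++ w)),
    forall a : env (dom M) x, A a ->
    forall B0 : list elt, NoDup B0 -> (forall p, In p B0 -> B p) -> 2 <= length B0 ->
    exists e : env (dom M) w,
      hall (dom M) (fun s d => In (existT _ s d) B0) w e /\
      sat zeta (happ (dom M) x w a e) /\
      (forall b : env (dom M) x, sat zeta (happ (dom M) x w b e) ->
         forall c : env (dom M) y, hall (dom M) (fun s d => In (existT _ s d) B0) y c ->
           (phi b c <-> phi a c)).

End Syntax.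

Arguments ushd [L] M x y phi A B.
Arguments sortset [L] M s P _.

(* Main.v *)
Require Import Defs.
From Stdlib Require Import List Classical Eqdep Lia PeanoNat FinFun.
Import ListNotations.
Set Implicit Arguments.

Fixpoint hmap {S : Type} {D1 D2 : S -> Type} (F : forall s, D1 s -> D2 s) (l : list S)
  : env D1 l -> env D2 l :=
  match l return env D1 l -> env D2 l with
  | nil => fun _ => tt
  | s :: l' => fun e => (F s (fst e), hmap F l' (snd e))
  end.

Fixpoint glookup {L : signature} {D : sort L -> Type} G s (v : var L G s) : env D G -> D s :=
  match v in var _ G s return env D G -> D s with
  | @vz _ _ _ => fun e => fst e
  | @vs _ _ _ _ v' => fun e => glookup v' (snd e)
  end.

Fixpoint env_of {L : signature} (M : structure L) {G'} G
  : env (var L G') G -> env (dom M) G' -> env (dom M) G :=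
  match G return env (var L G') G -> env (dom M) G' -> env (dom M) G with
  | nil => fun _ _ => tt
  | s :: G0 => fun σ e' => (lookup M (fst σ) e', env_of M G0 (snd σ) e')
  end.

Lemma glookup_ok {L} (M : structure L) G' G s (v : var L G s) (σ : env (var L G') G) e' :
  lookup M (glookup v σ) e' = lookup M v (env_of M G σ e').
Proof. induction v; simpl; auto. Qed.

Fixpoint trename {L} {G G'} (σ : env (var L G') G) s (t : term L G s) : term L G' s :=
  match t with
  | @tvar _ _ _ v => tvar (glookup v σ)
  | @tapp _ _ f ts => tapp f (tsrename σ ts)
  end
with tsrename {L} {G G'} (σ : env (var L G') G) l (ts : terms L G l) : terms L G' l :=
  match ts with
  | @tnil _ _ => tnil _ _
  | @tcons _ _ _ _ t ts' => tcons (trename σ t) (tsrename σ ts')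
  end.

Definition liftσ {L} {G G'} (t : sort L) (σ : env (var L G') G) : env (var L (t :: G')) (t :: G) :=
  (vz L G' t, hmap (fun s v => vs t v) G σ).

Fixpoint frename {L} {G G'} (σ : env (var L G') G) (p : formula L G) : formula L G' :=
  match p with
  | @fTrue _ _ => fTrue _ _
  | @feq _ _ _ t1 t2 => feq (trename σ t1) (trename σ t2)
  | @frel _ _ r ts => frel r (tsrename σ ts)
  | @fneg _ _ q => fneg (frename σ q)
  | @fand _ _ q1 q2 => fand (frename σ q1) (frename σ q2)
  | @fex _ _ s q => fex (frename (liftσ s σ) q)
  end.

Scheme term_mut := Induction for term Sort Prop
with terms_mut := Induction for terms Sort Prop.

Lemma trename_ok {L} (M : structure L) G G' (σ : env (var L G') G) e' :
  (forall s (t : term L G s), teval M (trename σ t) e' = teval M t (env_of M G σ e')) /\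
  (forall l (ts : terms L G l), tseval M (tsrename σ ts) e' = tseval M ts (env_of M G σ e')).
Proof.
  split.
  - apply (term_mut (fun s t => teval M (trename σ t) e' = teval M t (env_of M G σ e'))
                    (fun l ts => tseval M (tsrename σ ts) e' = tseval M ts (env_of M G σ e'))); simpl; intros.
    + apply glookup_ok.
    + rewrite H; auto.
    + auto.
    + rewrite H, H0; auto.
  - apply (terms_mut (fun s t => teval M (trename σ t) e' = teval M t (env_of M G σ e'))
                    (fun l ts => tseval M (tsrename σ ts) e' = tseval M ts (env_of M G σ e'))); simpl; intros.
    + apply glookup_ok.
    + rewrite H; auto.
    + auto.
    + rewrite H, H0; auto.
Qed.

Lemma env_of_weak {L} (M : structure L) G' G t (σ : env (var L G') G) (d : dom M t) e' :
  env_of M G (hmap (fun s v => vs t v) G σ) (d, e') = env_of M G σ e'.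
Proof. induction G; simpl; auto. destruct σ; simpl; rewrite IHG; auto. Qed.

Lemma frename_ok {L} (M : structure L) G (p : formula L G) : forall G' (σ : env (var L G') G) e',
  sat M (frename σ p) e' <-> sat M p (env_of M G σ e').
Proof.
  induction p; intros; simpl.
  - tauto.
  - rewrite !(proj1 (trename_ok M _ _ σ e')); tauto.
  - rewrite (proj2 (trename_ok M _ _ σ e')); tauto.
  - rewrite IHp; tauto.
  - rewrite IHp1, IHp2; tauto.
  - split; intros [d Hd]; exists d; revert Hd; rewrite IHp; unfold liftσ; simpl;
      rewrite env_of_weak; auto.
Qed.

Definition isproj {L} (M : structure L) {G' G} (g : env (dom M) G' -> env (dom M) G) : Prop :=
  exists σ : env (var L G') G, forall e, g e = env_of M G σ e.
Definition isvar {L} (M : structure L) {G' s} (h : env (dom M) G' -> dom M s) : Prop :=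
  exists v : var L G' s, forall e, h e = lookup M v e.
Definition definable {L} (M : structure L) {G} (P : env (dom M) G -> Prop) : Prop :=
  exists p : formula L G, forall e, sat M p e <-> P e.

Fixpoint idσ {L} G : env (var L G) G :=
  match G return env (var L G) G with
  | nil => tt
  | s :: G0 => (vz L G0 s, hmap (fun s0 v => vs s v) G0 (idσ G0))
  end.

Lemma env_of_id {L} (M : structure L) G e : env_of M G (idσ G) e = e.
Proof. induction G; simpl. destruct e; auto. destruct e; simpl. rewrite env_of_weak, IHG; auto. Qed.

Lemma isproj_id {L} (M : structure L) G : isproj M (fun e : env (dom M) G => e).
Proof. exists (idσ G); intros; rewrite env_of_id; auto. Qed.

Lemma isproj_weak {L} (M : structure L) G' G t (g : env (dom M) G' -> env (dom M) G) :
  isproj M g -> isproj M (fun e : env (dom M) (t :: G') => g (snd e)).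
Proof. intros [σ H]. exists (hmap (fun s v => vs t v) G σ). intros [d e]; simpl. rewrite env_of_weak; auto. Qed.

Lemma isproj_cons {L} (M : structure L) G' G s (h : env (dom M) G' -> dom M s) (g : env (dom M) G' -> env (dom M) G) :
  isvar M h -> isproj M g -> isproj M (fun e => ((h e, g e) : env (dom M) (s :: G))).
Proof. intros [v Hv] [σ H]. exists ((v, σ) : env (var L G') (s :: G)). intros; simpl; rewrite Hv, H; auto. Qed.

Lemma isproj_nil {L} (M : structure L) G' : isproj M (fun e : env (dom M) G' => (tt : env (dom M) nil)).
Proof. exists tt; auto. Qed.

Lemma env_of_happ {L} (M : structure L) G' G1 G2 (σ1 : env (var L G') G1) σ2 e :
  env_of M (G1 ++ G2) (happ _ G1 G2 σ1 σ2) e = happ _ G1 G2 (env_of M G1 σ1 e) (env_of M G2 σ2 e).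
Proof. induction G1; simpl; auto. rewrite IHG1; auto. Qed.

Lemma isproj_happ {L} (M : structure L) G' G1 G2 (g1 : env (dom M) G' -> env (dom M) G1) (g2 : env (dom M) G' -> env (dom M) G2) :
  isproj M g1 -> isproj M g2 -> isproj M (fun e => happ _ G1 G2 (g1 e) (g2 e)).
Proof. intros [σ1 H1] [σ2 H2]. exists (happ _ G1 G2 σ1 σ2); intros; rewrite env_of_happ, H1, H2; auto. Qed.

Lemma isvar_lookup {L} (M : structure L) G' G s (v : var L G s) (g : env (dom M) G' -> env (dom M) G) :
  isproj M g -> isvar M (fun e => lookup M v (g e)).
Proof. intros [σ H]. exists (glookup v σ). intros; rewrite glookup_ok, H; auto. Qed.

Lemma isvar_fst {L} (M : structure L) G' G s (g : env (dom M) G' -> env (dom M) (s :: G)) :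
  isproj M g -> isvar M (fun e => fst (g e)).
Proof. intros H. exact (isvar_lookup (vz L G s) H). Qed.

Lemma isproj_snd {L} (M : structure L) G' G s (g : env (dom M) G' -> env (dom M) (s :: G)) :
  isproj M g -> isproj M (fun e => snd (g e)).
Proof. intros [σ H]. exists (snd σ). intros; rewrite H; auto. Qed.

Lemma isproj_comp {L} (M : structure L) G1 G2 G3 (g1 : env (dom M) G2 -> env (dom M) G3) (g2 : env (dom M) G1 -> env (dom M) G2) :
  isproj M g1 -> isproj M g2 -> isproj M (fun e => g1 (g2 e)).
Proof.
  intros [σ1 H1] [σ2 H2]. exists (hmap (fun s v => glookup v σ2) G3 σ1). intros e.
  rewrite H1, H2. clear. induction G3; simpl; auto. rewrite IHG3, glookup_ok; auto.
Qed.

Fixpoint hsplit {S : Type} (D : S -> Type) (l1 l2 : list S) : env D (l1 ++ l2) -> env D l1 * env D l2 :=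
  match l1 return env D (l1 ++ l2) -> env D l1 * env D l2 with
  | nil => fun e => (tt, e)
  | s :: l => fun e => let p := hsplit D l l2 (snd e) in ((fst e, fst p), snd p)
  end.

Lemma hsplit_happ {S : Type} (D : S -> Type) l1 l2 (a : env D l1) (b : env D l2) :
  hsplit D l1 l2 (happ D l1 l2 a b) = (a, b).
Proof. induction l1; simpl. destruct a; auto. destruct a; simpl; rewrite IHl1; auto. Qed.

Lemma happ_hsplit {S : Type} (D : S -> Type) l1 l2 (e : env D (l1 ++ l2)) :
  happ D l1 l2 (fst (hsplit D l1 l2 e)) (snd (hsplit D l1 l2 e)) = e.
Proof. induction l1; simpl; auto. destruct e; simpl; rewrite IHl1; auto. Qed.

Lemma isproj_hfst {L} (M : structure L) G1 G2 : isproj M (fun e => fst (hsplit (dom M) G1 G2 e)).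
Proof.
  induction G1; simpl. apply isproj_nil.
  apply isproj_cons. apply (isvar_fst (isproj_id M _)).
  apply (isproj_weak a IHG1).
Qed.

Lemma isproj_hsnd {L} (M : structure L) G1 G2 : isproj M (fun e => snd (hsplit (dom M) G1 G2 e)).
Proof.
  induction G1; simpl. apply isproj_id.
  apply (isproj_weak a IHG1).
Qed.

Lemma def_ext {L} (M : structure L) G (P Q : env (dom M) G -> Prop) :
  definable M P -> (forall e, P e <-> Q e) -> definable M Q.
Proof. intros [p H] H'. exists p; intros; rewrite H; auto. Qed.

Lemma def_sat {L} (M : structure L) G (p : formula L G) : definable M (sat M p).
Proof. exists p; tauto. Qed.

Lemma def_and {L} (M : structure L) G (P Q : env (dom M) G -> Prop) :
  definable M P -> definable M Q -> definable M (fun e => P e /\ Q e).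
Proof. intros [p H] [q H']. exists (fand p q); intros; simpl; rewrite H, H'; tauto. Qed.

Lemma def_neg {L} (M : structure L) G (P : env (dom M) G -> Prop) :
  definable M P -> definable M (fun e => ~ P e).
Proof. intros [p H]. exists (fneg p); intros; simpl; rewrite H; tauto. Qed.

Lemma def_imp {L} (M : structure L) G (P Q : env (dom M) G -> Prop) :
  definable M P -> definable M Q -> definable M (fun e => P e -> Q e).
Proof.
  intros HP HQ. apply def_ext with (fun e => ~ (P e /\ ~ Q e)).
  apply def_neg, def_and; auto; apply def_neg; auto.
  intros e; split; intros H. intros HPe. apply NNPP; intros HQe; apply H; auto. tauto.
Qed.

Lemma def_iff {L} (M : structure L) G (P Q : env (dom M) G -> Prop) :
  definable M P -> definable M Q -> definable M (fun e => P e <-> Q e).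
Proof. intros HP HQ. apply def_ext with (fun e => (P e -> Q e) /\ (Q e -> P e)).
  apply def_and; apply def_imp; auto. tauto. Qed.

Lemma def_ex {L} (M : structure L) G s (P : env (dom M) (s :: G) -> Prop) :
  definable M P -> definable M (fun e => exists d, P (d, e)).
Proof. intros [p H]. exists (fex p); intros; simpl. split; intros [d Hd]; exists d; apply H; auto. Qed.

Lemma def_exs {L} (M : structure L) D G (P : env (dom M) (D ++ G) -> Prop) :
  definable M P -> definable M (fun e => exists d, P (happ _ D G d e)).
Proof.
  revert G P; induction D; intros G P HP; simpl.
  - apply def_ext with P; auto. intros e; split. intros; exists tt; auto. intros [_ H]; auto.
  - apply def_ext with (fun e => exists d0, exists d1, P (d1, happ _ D G d0 e)).
    + apply (IHD G (fun e => exists d1, P (d1, e))). apply def_ex; auto.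
    + intros e; split. intros [d0 [d1 H]]; exists (d1, d0); auto.
      intros [[d1 d0] H]; exists d0, d1; auto.
Qed.

Lemma def_alls {L} (M : structure L) D G (P : env (dom M) (D ++ G) -> Prop) :
  definable M P -> definable M (fun e => forall d, P (happ _ D G d e)).
Proof.
  intros HP. apply def_ext with (fun e => ~ exists d, ~ P (happ _ D G d e)).
  apply def_neg. apply (@def_exs L M D G (fun e => ~ P e)). apply def_neg; auto.
  intros e; split. intros H d; apply NNPP; intros H'; apply H; eauto.
  intros H [d Hd]; auto.
Qed.

Lemma def_comp {L} (M : structure L) G' G (P : env (dom M) G -> Prop) (g : env (dom M) G' -> env (dom M) G) :
  definable M P -> isproj M g -> definable M (fun e => P (g e)).
Proof. intros [p H] [σ Hσ]. exists (frename σ p). intros; rewrite frename_ok, Hσ, H; tauto. Qed.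

Lemma def_eqv {L} (M : structure L) G s (h1 h2 : env (dom M) G -> dom M s) :
  isvar M h1 -> isvar M h2 -> definable M (fun e => h1 e = h2 e).
Proof. intros [v1 H1] [v2 H2]. exists (feq (tvar v1) (tvar v2)); intros; simpl; rewrite H1, H2; tauto. Qed.

Definition hd {L} {M : structure L} {s : sort L} {G} (e : env (dom M) (s :: G)) : dom M s := fst e.
Definition tl {L} {M : structure L} {s : sort L} {G} (e : env (dom M) (s :: G)) : env (dom M) G := snd e.

Lemma isvar_hd {L} (M : structure L) G' G s (g : env (dom M) G' -> env (dom M) (s :: G)) :
  isproj M g -> isvar M (fun e => hd (g e)).
Proof. exact (@isvar_fst L M G' G s g). Qed.
Lemma isproj_tl {L} (M : structure L) G' G s (g : env (dom M) G' -> env (dom M) (s :: G)) :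
  isproj M g -> isproj M (fun e => tl (g e)).
Proof. exact (@isproj_snd L M G' G s g). Qed.

Fixpoint FE {L} {M : structure L} {sS sT : sort L} (f : dom M sT -> dom M sS) n
  : env (dom M) (repeat sT n) -> env (dom M) (repeat sS n) -> Prop :=
  match n return env (dom M) (repeat sT n) -> env (dom M) (repeat sS n) -> Prop with
  | 0 => fun _ _ => True
  | Datatypes.S n' => fun z y => f (fst z) = fst y /\ FE f n' (snd z) (snd y)
  end.

Fixpoint fmapn {L} {M : structure L} {sS sT : sort L} (f : dom M sT -> dom M sS) n
  : env (dom M) (repeat sT n) -> env (dom M) (repeat sS n) :=
  match n return env (dom M) (repeat sT n) -> env (dom M) (repeat sS n) with
  | 0 => fun _ => tt
  | Datatypes.S n' => fun z => (f (fst z), fmapn f n' (snd z))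
  end.

Lemma FE_fmapn {L} {M : structure L} {sS sT : sort L} (f : dom M sT -> dom M sS) n z :
  FE f n z (fmapn f n z).
Proof. induction n; simpl; auto. Qed.

Lemma def_FE {L} (M : structure L) (sS sT : sort L) (f : dom M sT -> dom M sS)
  (theta : formula L [sT; sS])
  (Hdef : forall z y, sat M theta (z, (y, tt)) <-> f z = y) n :
  forall G' (g1 : env (dom M) G' -> env (dom M) (repeat sT n)) (g2 : env (dom M) G' -> env (dom M) (repeat sS n)),
  isproj M g1 -> isproj M g2 -> definable M (fun e => FE f n (g1 e) (g2 e)).
Proof.
  induction n; intros G' g1 g2 H1 H2; simpl.
  - exists (fTrue _ _); simpl; tauto.
  - apply def_and.
    + apply def_ext with (fun e => sat M theta (fst (g1 e), (fst (g2 e), tt))).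
      * apply (def_comp (def_sat M theta)).
        apply (@isproj_cons L M G' [sS] sT (fun e => fst (g1 e)) (fun e => (fst (g2 e), tt))). apply (isvar_fst H1).
        apply (@isproj_cons L M G' [] sS (fun e => fst (g2 e)) (fun e => tt)). apply (isvar_fst H2). apply isproj_nil.
      * intros; apply Hdef.
    + apply IHn; apply isproj_snd; auto.
Qed.

Fixpoint trip {L} (s : sort L) m : list (sort L) :=
  match m with 0 => nil | Datatypes.S m' => s :: s :: s :: trip s m' end.

Fixpoint PC {L} {M : structure L} {x} {sS : sort L} (P : env (dom M) x -> dom M sS -> Prop) m
  : env (dom M) x -> env (dom M) (trip sS m) -> Prop :=
  match m return env (dom M) x -> env (dom M) (trip sS m) -> Prop with
  | 0 => fun _ _ => True
  | Datatypes.S m' => fun b t => (P b (hd t) <-> hd (tl t) = hd (tl (tl t))) /\ PC P m' b (tl (tl (tl t)))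
  end.

Lemma def_PC {L} (M : structure L) x (sS : sort L) (phi : formula L (x ++ [sS])) m :
  forall G' (gb : env (dom M) G' -> env (dom M) x) (gt : env (dom M) G' -> env (dom M) (trip sS m)),
  isproj M gb -> isproj M gt ->
  definable M (fun e => PC (fun b c => sat M phi (happ (dom M) x [sS] b (c, tt))) m (gb e) (gt e)).
Proof.
  induction m; intros G' gb gt Hb Ht; simpl.
  - exists (fTrue _ _); simpl; tauto.
  - apply def_and.
    + apply def_iff.
      * apply (def_comp (def_sat M phi)). apply isproj_happ; auto.
        apply (@isproj_cons L M G' [] sS (fun e => fst (gt e)) (fun e => tt)). apply (isvar_fst Ht). apply isproj_nil.
      * apply def_eqv. apply isvar_hd. apply isproj_tl; auto.
        apply isvar_hd. apply isproj_tl; apply isproj_tl; auto.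
    + apply IHm; auto. apply isproj_tl; apply isproj_tl; apply isproj_tl; auto.
Qed.

Lemma fib1 {A B : Type} (f : A -> B) N
  (HN : forall b (l : list A), NoDup l -> (forall z, In z l -> f z = b) -> length l <= N) b :
  exists l : list A, length l <= N /\ forall z, f z = b -> In z l.
Proof.
  destruct (classic (exists l : list A, length l <= N /\ forall z, f z = b -> In z l)) as [H|H]; auto.
  exfalso.
  assert (forall k, k <= Datatypes.S N -> exists l, NoDup l /\ length l = k /\ forall z, In z l -> f z = b).
  { induction k; intros Hk.
    - exists nil; repeat split; simpl; auto. constructor. tauto.
    - destruct IHk as [l [Hnd [Hlen Hf]]]. lia.
      assert (exists z, f z = b /\ ~ In z l) as [z [Hz1 Hz2]].
      { apply NNPP; intros H'. apply H. exists l; split. lia.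
        intros z Hz. apply NNPP; intros Hn. apply H'; eauto. }
      exists (z :: l); repeat split; simpl; auto. constructor; auto.
      intros z0 [<-|Hz0]; auto. }
  destruct (H0 (Datatypes.S N)) as [l [Hnd [Hlen Hf]]]; auto.
  specialize (HN b l Hnd Hf). lia.
Qed.

Lemma fibn {L} {M : structure L} {sS sT : sort L} (f : dom M sT -> dom M sS) N
  (HN : forall b (l : list (dom M sT)), NoDup l -> (forall z, In z l -> f z = b) -> length l <= N) n :
  forall y : env (dom M) (repeat sS n), exists l : list (env (dom M) (repeat sT n)),
    length l <= N ^ n /\ forall z, FE f n z y -> In z l.
Proof.
  induction n; intros y; simpl.
  - exists [tt]; split; simpl; auto. intros [] _; auto.
  - destruct (@fib1 _ _ f N HN (fst y)) as [l1 [H1 H1']].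
    destruct (IHn (snd y)) as [l2 [H2 H2']].
    exists (list_prod l1 l2). split.
    + rewrite length_prod. apply Nat.mul_le_mono; auto.
    + intros [z1 z2] [Hz1 Hz2]. apply in_prod; auto.
Qed.

Lemma build_t {L} {M : structure L} {x} {sS : sort L} (Z : Type) (Q : Z -> env (dom M) x -> Prop)
  (P : env (dom M) x -> dom M sS -> Prop) (B0 : list (elt M)) (a : env (dom M) x) d0 d1 :
  d0 <> d1 -> In (existT _ sS d0) B0 -> In (existT _ sS d1) B0 ->
  forall m (Lz : list Z), length Lz <= m ->
  exists t : env (dom M) (trip sS m),
    hall (dom M) (fun s d => In (existT _ s d) B0) (trip sS m) t /\
    (forall b, (forall c, In (existT _ sS c) B0 -> (P b c <-> P a c)) -> PC P m b t) /\
    (forall z, In z Lz -> (forall b, Q z b -> PC P m b t) ->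
       forall b, Q z b -> forall c, In (existT _ sS c) B0 -> (P b c <-> P a c)).
Proof.
  intros Hd H0 H1.
  assert (Htr : forall c, In (existT _ sS c) B0 -> exists v, In (existT _ sS v) B0 /\ (P a c <-> d0 = v)).
  { intros c Hc. destruct (classic (P a c)) as [Hp|Hp].
    - exists d0; split; auto; tauto.
    - exists d1; split; auto. split; intros; [tauto|]. exfalso; apply Hd; auto. }
  induction m; intros Lz Hlen.
  - destruct Lz; [|simpl in Hlen; lia].
    exists tt; simpl; repeat split; auto; contradiction.
  - destruct Lz as [|z0 Lz'].
    + destruct (IHm [] (Nat.le_0_l _)) as [t [Ht1 [Ht2 _]]].
      destruct (Htr d0 H0) as [v [Hv1 Hv2]].
      exists (d0, (d0, (v, t))). split; [simpl; repeat split; auto|split].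
      * intros b Hb. simpl; unfold hd, tl; simpl. split; [rewrite (Hb _ H0); exact Hv2 | apply Ht2; auto].
      * intros z [].
    + simpl in Hlen. destruct (IHm Lz' ltac:(lia)) as [t [Ht1 [Ht2 Ht3]]].
      destruct (classic (forall b, Q z0 b -> forall c, In (existT _ sS c) B0 -> (P b c <-> P a c))) as [Hg|Hg].
      * destruct (Htr d0 H0) as [v [Hv1 Hv2]].
        exists (d0, (d0, (v, t))). split; [simpl; repeat split; auto|split].
        -- intros b Hb. simpl; unfold hd, tl; simpl. split; [rewrite (Hb _ H0); exact Hv2 | apply Ht2; auto].
        -- intros z [<-|Hz] Hall. exact Hg.
           apply Ht3; auto. intros b Hb; apply Hall; auto.
      * assert (exists b c, Q z0 b /\ In (existT _ sS c) B0 /\ ~ (P b c <-> P a c)) as [b0 [c0 [Hb0 [Hc0 Hn]]]].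
        { apply NNPP; intros Hn. apply Hg. intros b Hb c Hc. apply NNPP; intros Hn'. apply Hn; eauto 6. }
        destruct (Htr c0 Hc0) as [v [Hv1 Hv2]].
        exists (c0, (d0, (v, t))). split; [simpl; repeat split; auto|split].
        -- intros b Hb. simpl; unfold hd, tl; simpl. split; [rewrite (Hb _ Hc0); exact Hv2 | apply Ht2; auto].
        -- intros z [<-|Hz] Hall.
           ++ exfalso. destruct (Hall b0 Hb0) as [Ha1 _]. unfold hd, tl in Ha1; simpl in Ha1. apply Hn. tauto.
           ++ apply Ht3; auto. intros b Hb; apply Hall; auto.
Qed.

Lemma Bt_lemma {L} (M : structure L) (sS sT : sort L) (f : dom M sT -> dom M sS)
  (B : dom M sS -> Prop) (HB : forall b, B b -> exists z, f z = b) :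
  forall B0 : list (elt M), NoDup B0 -> (forall p, In p B0 -> sortset M sS B p) ->
  exists Bt : list (dom M sT), NoDup Bt /\ length Bt = length B0 /\
    (forall z, In z Bt -> In (existT _ sS (f z)) B0 /\ B (f z)) /\
    (forall c, In (existT _ sS c) B0 -> exists z, In z Bt /\ f z = c).
Proof.
  induction B0 as [|p B0' IH]; intros ND Hsub.
  - exists nil; simpl; repeat split; auto; try constructor; tauto.
  - apply NoDup_cons_iff in ND as [Hp ND].
    destruct (Hsub p (or_introl eq_refl)) as [b [-> Hb]].
    destruct (HB b Hb) as [z Hz].
    destruct IH as [Bt [H1 [H2 [H3 H4]]]]; auto.
    { intros q Hq; apply Hsub; simpl; auto. }
    exists (z :: Bt); simpl; repeat split.
    + constructor; auto. intros Hin. apply Hp. destruct (H3 z Hin) as [Hi _]. rewrite Hz in Hi; auto.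
    + auto.
    + destruct H as [<-|Hin]. left; rewrite Hz; auto. right; apply H3; auto.
    + destruct H as [<-|Hin]. rewrite Hz; auto. apply H3; auto.
    + intros c [Hc|Hc].
      * apply inj_pair2 in Hc. subst. exists z; auto.
      * destruct (H4 c Hc) as [z' [? ?]]. exists z'; auto.
Qed.

Lemma two_elts {L} (M : structure L) (sS : sort L) (B : dom M sS -> Prop) (B0 : list (elt M)) :
  NoDup B0 -> (forall p, In p B0 -> sortset M sS B p) -> 2 <= length B0 ->
  exists d0 d1 : dom M sS, d0 <> d1 /\ In (existT _ sS d0) B0 /\ In (existT _ sS d1) B0.
Proof.
  intros ND Hsub Hlen. destruct B0 as [|p0 [|p1 B0']]; simpl in Hlen; try lia.
  destruct (Hsub p0) as [d0 [-> _]]; simpl; auto.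
  destruct (Hsub p1) as [d1 [-> _]]; simpl; auto.
  exists d0, d1. repeat split; simpl; auto.
  intros ->. inversion ND. apply H1; simpl; auto.
Qed.

Lemma hall_happ {S : Type} (D : S -> Type) (P : forall s, D s -> Prop) l1 l2 (a : env D l1) (b : env D l2) :
  hall D P l1 a -> hall D P l2 b -> hall D P (l1 ++ l2) (happ D l1 l2 a b).
Proof. induction l1; simpl; auto. destruct a; simpl. intros [H1 H2] Hb; split; auto. Qed.

Lemma hall_fmap {L} (M : structure L) (sS sT : sort L) (f : dom M sT -> dom M sS) (B1 B2 : list (elt M)) n
  (e : env (dom M) (repeat sT n)) :
  (forall z, In (existT _ sT z) B1 -> In (existT _ sS (f z)) B2) ->
  hall (dom M) (fun s d => In (existT _ s d) B1) (repeat sT n) e ->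
  hall (dom M) (fun s d => In (existT _ s d) B2) (repeat sS n) (fmapn f n e).
Proof. intros Hf; induction n; simpl; auto. intros [H1 H2]; split; auto. Qed.

Lemma hall_sorts {L} (M : structure L) (sT : sort L) (Lst : list (elt M)) w (e : env (dom M) w) :
  (forall p, In p Lst -> projT1 p = sT) ->
  hall (dom M) (fun s d => In (existT _ s d) Lst) w e -> Forall (fun s => s = sT) w.
Proof.
  intros H; induction w; simpl; intros Hh. constructor.
  destruct Hh as [H1 H2]. constructor. apply (H _ H1). eapply IHw; eauto.
Qed.

Lemma def_Z {L} (M : structure L) (sS sT : sort L) (f : dom M sT -> dom M sS)
  (theta : formula L [sT; sS])
  (Hdef : forall z y, sat M theta (z, (y, tt)) <-> f z = y) x n m
  (zeta : formula L (x ++ repeat sT n)) (phi : formula L (x ++ [sS])) :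
  definable M (fun E : env (dom M) (x ++ (repeat sS n ++ trip sS m)) =>
    exists z, FE f n z (fst (hsplit _ (repeat sS n) (trip sS m) (snd (hsplit _ x _ E)))) /\
      sat M zeta (happ _ x _ (fst (hsplit _ x _ E)) z) /\
      forall b, sat M zeta (happ _ x _ b z) ->
        PC (fun b c => sat M phi (happ (dom M) x [sS] b (c, tt))) m b
           (snd (hsplit _ (repeat sS n) (trip sS m) (snd (hsplit _ x _ E))))).
Proof.
  set (Wy := repeat sS n). set (Wt := trip sS m). set (W := Wy ++ Wt).
  set (D := repeat sT n). set (G := x ++ W).
  set (P := fun b c => sat M phi (happ (dom M) x [sS] b (c, tt))).
  pose (Body := fun E' : env (dom M) (D ++ G) =>
      FE f n (fst (hsplit _ D G E')) (fst (hsplit _ Wy Wt (snd (hsplit _ x W (snd (hsplit _ D G E')))))) /\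
      sat M zeta (happ _ x D (fst (hsplit _ x W (snd (hsplit _ D G E')))) (fst (hsplit _ D G E'))) /\
      forall b, sat M zeta (happ _ x D b (fst (hsplit _ D G E'))) ->
        PC P m b (snd (hsplit _ Wy Wt (snd (hsplit _ x W (snd (hsplit _ D G E'))))))).
  apply def_ext with (fun E => exists d, Body (happ _ D G d E)).
  2: { intros E; split; intros [d Hd]; exists d; revert Hd; unfold Body; rewrite hsplit_happ; cbn [fst snd]; auto. }
  apply (@def_exs L M D G Body). unfold Body.
  apply def_and.
  { apply (def_FE f theta Hdef n). apply isproj_hfst.
    exact (isproj_comp (isproj_hfst M Wy Wt) (isproj_comp (isproj_hsnd M x W) (isproj_hsnd M D G))). }
  apply def_and.
  { apply (def_comp (def_sat M zeta)).
    exact (isproj_happ (isproj_comp (isproj_hfst M x W) (isproj_hsnd M D G)) (isproj_hfst M D G)). }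
  pose (Body2 := fun E'' : env (dom M) (x ++ (D ++ G)) =>
      sat M zeta (happ _ x D (fst (hsplit _ x (D ++ G) E'')) (fst (hsplit _ D G (snd (hsplit _ x (D ++ G) E''))))) ->
      PC P m (fst (hsplit _ x (D ++ G) E''))
        (snd (hsplit _ Wy Wt (snd (hsplit _ x W (snd (hsplit _ D G (snd (hsplit _ x (D ++ G) E''))))))))).
  apply def_ext with (fun E' => forall b, Body2 (happ _ x (D ++ G) b E')).
  2: { intros E'; unfold Body2; split; intros Hb b; specialize (Hb b); revert Hb; rewrite hsplit_happ; cbn [fst snd]; auto. }
  apply (@def_alls L M x (D ++ G) Body2). unfold Body2. apply def_imp.
  - apply (def_comp (def_sat M zeta)).
    exact (isproj_happ (isproj_hfst M x (D ++ G)) (isproj_comp (isproj_hfst M D G) (isproj_hsnd M x (D ++ G)))).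
  - apply def_PC. apply isproj_hfst.
    exact (isproj_comp (isproj_hsnd M Wy Wt) (isproj_comp (isproj_hsnd M x W) (isproj_comp (isproj_hsnd M D G) (isproj_hsnd M x (D ++ G))))).
Qed.
Unset Implicit Arguments.

Theorem lemma3p6 (L : signature) (M : structure L) (S St : sort L)
  (f : dom M St -> dom M S)
  (* f is L-definable without parameters, by theta(z,y) *)
  (theta : formula L [St; S])
  (Hdef : forall (z : dom M St) (y : dom M S), sat M theta (z, (y, tt)) <-> f z = y)
  (* uniformly finite fibres *)
  (Hfin : exists N : nat, forall (b : dom M S) (l : list (dom M St)),
      NoDup l -> (forall z, In z l -> f z = b) -> length l <= N)
  (B : dom M S -> Prop) (HB : forall b, B b -> exists z, f z = b)
  (x : list (sort L)) (A : env (dom M) x -> Prop)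
  (phi : formula L (x ++ [S]))
  (H : ushd M x [St]
         (fun a c => sat M phi (happ (dom M) x [S] a (f (fst c), tt)))
         A (sortset M St (fun z => B (f z)))) :
  ushd M x [S] (fun a c => sat M phi (happ (dom M) x [S] a c)) A (sortset M S B).
Proof.
  destruct H as [w [zeta Hz]].
  destruct Hfin as [N HN].
  assert (Hprep : forall B0 : list (elt M), NoDup B0 -> (forall p, In p B0 -> sortset M S B p) -> 2 <= length B0 ->
    exists Bt : list (dom M St),
      NoDup (map (fun z => existT (dom M) St z) Bt) /\
      (forall p, In p (map (fun z => existT (dom M) St z) Bt) -> sortset M St (fun z => B (f z)) p) /\
      2 <= length (map (fun z => existT (dom M) St z) Bt) /\
      (forall z, In (existT (dom M) St z) (map (fun z => existT (dom M) St z) Bt) -> In (existT _ S (f z)) B0) /\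
      (forall c, In (existT _ S c) B0 -> exists z, In (existT (dom M) St z) (map (fun z => existT (dom M) St z) Bt) /\ f z = c)).
  { intros B0 ND Hsub Hlen.
    destruct (Bt_lemma St f HB ND Hsub) as [Bt [H1 [H2 [H3 H4]]]].
    exists Bt. repeat split.
    - apply Injective_map_NoDup; auto. intros z1 z2 Hzz. apply inj_pair2 in Hzz; auto.
    - intros p Hp. apply in_map_iff in Hp as [z [<- Hz0]]. exists z; split; auto. apply H3; auto.
    - rewrite length_map; lia.
    - intros z Hz0. apply in_map_iff in Hz0 as [z' [Hzz Hz']]. apply inj_pair2 in Hzz; subst. apply H3; auto.
    - intros c Hc. destruct (H4 c Hc) as [z [Hz1 Hz2]]. exists z; split; auto. apply in_map; auto. }
  destruct (classic (Forall (fun s => s = St) w)) as [Hw|Hw].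
  2: { exists nil, (fTrue _ _). intros a Ha B0 ND Hsub Hlen. exfalso.
       destruct (Hprep B0 ND Hsub Hlen) as [Bt [H1 [H2 [H3 _]]]].
       destruct (Hz a Ha _ H1 H2 H3) as [e [He _]].
       apply Hw. apply (hall_sorts (map (fun z => existT (dom M) St z) Bt) _ e); auto.
       intros p Hp. apply in_map_iff in Hp as [z [<- _]]. reflexivity. }
  assert (exists n, w = repeat St n) as [n ->].
  { clear -Hw. induction Hw. exists 0; auto. destruct IHHw as [n ->]. exists (Datatypes.S n); simpl; subst; auto. }
  destruct (@def_Z L M S St f theta Hdef x n (N ^ n) zeta phi) as [zeta' Hzeta'].
  exists (repeat S n ++ trip S (N ^ n)), zeta'.
  intros a Ha B0 ND Hsub Hlen.
  destruct (Hprep B0 ND Hsub Hlen) as [Bt [H1 [H2 [H3 [H4 H5]]]]].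
  destruct (two_elts ND Hsub Hlen) as [d0 [d1 [Hd [Hd0 Hd1]]]].
  destruct (Hz a Ha _ H1 H2 H3) as [e [He1 [He2 He3]]].
  set (y := fmapn f n e).
  destruct (fibn f HN n y) as [Lz [HLz1 HLz2]].
  destruct (@build_t L M x S (env (dom M) (repeat St n)) (fun z b => sat M zeta (happ _ x _ b z))
              (fun b c => sat M phi (happ (dom M) x [S] b (c, tt))) B0 a d0 d1 Hd Hd0 Hd1 (N ^ n) Lz HLz1)
    as [t [Ht1 [Ht2 Ht3]]].
  exists (happ _ (repeat S n) (trip S (N ^ n)) y t).
  split; [|split].
  - apply hall_happ; auto. apply (hall_fmap S St f _ _ n e H4 He1).
  - apply Hzeta'. rewrite hsplit_happ; cbn [fst snd]. rewrite hsplit_happ; cbn [fst snd].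
    exists e. split; [apply FE_fmapn|split; [exact He2|]].
    intros b Hb. apply Ht2. intros c Hc. destruct (H5 c Hc) as [z [Hz1 Hz2]]. subst c.
    apply (He3 b Hb (z, tt)). simpl; auto.
  - intros b Hb c Hc. apply Hzeta' in Hb. revert Hb.
    rewrite hsplit_happ; cbn [fst snd]. rewrite hsplit_happ; cbn [fst snd].
    intros [z [Hz1 [Hz2 Hz3]]]. destruct c as [c []]. simpl in Hc. destruct Hc as [Hc _].
    exact (Ht3 z (HLz2 z Hz1) Hz3 b Hz2 c Hc).
Qed.
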